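(* If $\mathfrak R$ is a cubical iterated graph system, the Sierpiński gasket iterated graph system, or the pentagonal Sierpiński carpet iterated graph system, with replacement graphs $G_n$, then there are constants $C_{\mathrm{diam}}\ge1$ and $L_*>1$ such that for all $n\in\mathbb N$ \[ C_{\mathrm{diam}}^{-1}\cdot L_*^n\le\operatorname{diam}(G_n)\le C_{\mathrm{diam}}\cdot L_*^n, \] where $\operatorname{diam}(G_n)$ is the diameter with respect to the path metric of $G_n$.
   Context: Graphs: $(V,E)$, $V$ finite non-empty, $E\subseteq V\times V$, $(x,y)\in E\Rightarrow(y,x)\notin E$; $\{x,y\}\in E$ means either orientation; $d_G$ is the shortest-path metric in the underlying undirected graph. An iterated graph system (IGS) $\mathfrak R$ consists of a connected graph $G_1=(S,E)$, a finite set $\mathcal T$ of types, a surjective typing $\mathfrak t:E\to\mathcal T$ and non-empty gluing rules $I_t\subseteq S\times S$. With $W_m=S^m$, $[w]_k=w_1\cdots w_k$, the replacement graphs $G_m=(W_m,E_m)$ are defined recursively: $(w,v)\in E_{m+1}$ iff either (1) $[w]_m=[v]_m$ and $(w_{m+1},v_{m+1})\in E$ (type $\mathfrak t(w_{m+1},v_{m+1})$), or (2) $([w]_m,[v]_m)\in E_m$ and $(w_{m+1},v_{m+1})\in I_{\mathfrak t([w]_m,[v]_m)}$ (type $\mathfrak t([w]_m,[v]_m)$). Mapping of IGS $\varphi:\mathfrak R\to\mathfrak R'$: a graph mapping $G_1\to G_1'$ (edges go to edges or are collapsed) such that (i) if $\varphi(w_1)=\varphi(v_1)$ for an edge $\{w_1,v_1\}$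 of type $t$ then $\varphi(w_2)=\varphi(v_2)$ for all $(w_2,v_2)\in I_t$; (ii) if $(w_1,v_1)\in E$ has type $t$ and $(\varphi(w_1),\varphi(v_1))\in E'$ has type $t'$ then $(\varphi(w_2),\varphi(v_2))\in I'_{t'}$ for all $(w_2,v_2)\in I_t$; (iii) if $(w_1,v_1)\in E$ has type $t$ and $(\varphi(v_1),\varphi(w_1))\in E'$ has type $t'$ then $(\varphi(v_2),\varphi(w_2))\in I'_{t'}$ for all $(w_2,v_2)\in I_t$. Isomorphism of IGS: graph isomorphism with it and its inverse mappings of IGS; sub-system $\mathfrak R\subseteq\mathfrak R'$: $S\subseteq S'$, same types, inclusion a mapping of IGS. Cubical IGS: for integers $d_*\ge1,s_*\ge1,L_*\ge3$, $\mathfrak R(d_*,L_*,s_* )$ has symbols $\{1,\dots,L_*\}^{d_*}\times\{\underline1,\dots,\underline{s_*}\}$ with coordinates $c_i$ and sheet $s$; types $t_1,\dots,t_{d_*}$; $(w,v)$ is an edge of type $t_j$ iff $c_i(v)=c_i(w)$ ($i\ne j$), $c_j(v)=c_j(w)+1$; $(w,v)\in I_{t_j}$ iff $c_i(w)=c_i(v)$ ($i\ne j$), $(c_j(w),c_j(v))=(L_*,1)$, $s(w)=s(v)$. Sheet- and other-coordinate-preserving maps: $\eta_j:c_j\mapsto L_*+1-c_j$; $\alpha^+_{j,k}$ ($j\ne k$) swaps $c_j,c_k$; $\alpha^-_{j,k}$: $c_k\mapsto L_*+1-c_j$, $c_j\mapsto L_*+1-c_k$; $\mathcal G$ the set of these.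 A cubical IGS is a sub-system $\mathfrak R\subseteq\mathfrak R(d_*,L_*,s_* )$ with: (C1) for each $j$, every symbol with $c_i\in\{1,L_*\}$ for all $i\ne j$ and sheet $\underline1$ (condition $(\ast_j)$) is in $S(\mathfrak R)$; (C2) if $w,v$ satisfy $(\ast_j)$, agree off coordinate $j$, and $c_j(v)=c_j(w)+1$, then $(w,v)\in E(\mathfrak R)$; (C3) if $w,v$ satisfy $(\ast_j)$, agree off coordinate $j$, and $(c_j(w),c_j(v))=(L_*,1)$, then $(w,v)\in I_{t_j}(\mathfrak R)$; (C4) each $\alpha\in\mathcal G$ restricts to an isomorphism of IGS $\mathfrak R\to\mathfrak R$. Sierpiński gasket: $S=\{0,1,2\}$, $E=\{(0,1),(1,2),(0,2)\}$ of types $a,b,c$, $I_a=\{(1,0)\}$, $I_b=\{(2,1)\}$, $I_c=\{(2,0)\}$. Pentagonal Sierpiński carpet: $S=\{0,\dots,4\}$, $E=\{(0,1),(1,2),(2,3),(3,4),(4,0)\}$ of types $a,b,c,d,e$, $I_a=\{(1,0),(2,4)\}$, $I_b=\{(2,1),(3,0)\}$, $I_c=\{(3,2),(4,1)\}$, $I_d=\{(4,3),(0,2)\}$, $I_e=\{(0,4),(1,3)\}$. *)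

(* Defs.v *)
From Stdlib Require Import Reals.
From mathcomp Require Import all_boot.

Record igs (T : finType) := IGS {
  sym : finType;                 (* symbols S = vertices of G_1 *)
  edge : rel sym;
  etype : sym -> sym -> T;       (* typing t (only meaningful on edges) *)
  glue : T -> rel sym
}.
Arguments sym {T} i.
Arguments edge {T} i.
Arguments etype {T} i.
Arguments glue {T} i.

Definition undirected {T} (G : igs T) : rel (sym G) :=
  fun x y => edge G x y || edge G y x.

Definition is_igs {T} (G : igs T) : Prop :=
  (exists x : sym G, True) /\
  (forall x y, edge G x y -> ~~ edge G y x) /\
  (forall x y : sym G, connect (undirected G) x y) /\
  (forall t : T, exists x y, edge G x y /\ etype G x y = t) /\
  (forall t : T, exists x y, glue G t x y).

Definition is_mapping {T T'} (G : igs T) (G' : igs T') (f : sym G -> sym G') : Prop :=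
  (forall w v, edge G w v ->
     f w = f v \/ edge G' (f w) (f v) \/ edge G' (f v) (f w)) /\
  (forall w v, edge G w v -> f w = f v ->
     forall w2 v2, glue G (etype G w v) w2 v2 -> f w2 = f v2) /\
  (forall w v, edge G w v -> edge G' (f w) (f v) ->
     forall w2 v2, glue G (etype G w v) w2 v2 ->
       glue G' (etype G' (f w) (f v)) (f w2) (f v2)) /\
  (forall w v, edge G w v -> edge G' (f v) (f w) ->
     forall w2 v2, glue G (etype G w v) w2 v2 ->
       glue G' (etype G' (f v) (f w)) (f v2) (f w2)).

Definition is_iso {T T'} (G : igs T) (G' : igs T') (f : sym G -> sym G') : Prop :=
  exists g : sym G' -> sym G,
    cancel f g /\ cancel g f /\ is_mapping G G' f /\ is_mapping G' G g.

(* Replacement graphs G_m.  Words w = w_1...w_m are m-tuples; the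
   recursion below acts on reversed words (head = last letter w_m). *)
Fixpoint redge {T} (G : igs T) (w v : seq (sym G)) : option T :=
  match w, v with
  | x :: w', y :: v' =>
      if w' == v' then (if edge G x y then Some (etype G x y) else None)
      else match redge G w' v' with
           | Some t => if glue G t x y then Some t else None
           | None => None
           end
  | _, _ => None
  end.

Definition rg_edge {T} (G : igs T) (m : nat) : rel (m.-tuple (sym G)) :=
  fun w v => redge G (rev w) (rev v) != None.

Definition rg_adj {T} (G : igs T) (m : nat) : rel (m.-tuple (sym G)) :=
  fun w v => rg_edge G m w v || rg_edge G m v w.

Definition is_diam {T} (G : igs T) (m : nat) (D : nat) : Prop :=
  (forall x y : m.-tuple (sym G), exists p,
      path (rg_adj G m) x p /\ last x p = y /\ size p <= D) /\
  (exists x y : m.-tuple (sym G), forall p,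
      path (rg_adj G m) x p -> last x p = y -> D <= size p).

Definition diam_estimate {T} (G : igs T) : Prop :=
  exists C Ls : R, Rle 1 C /\ Rlt 1 Ls /\
    forall n : nat, 0 < n -> exists D : nat,
      is_diam G n D /\
      Rle (Rmult (Rinv C) (pow Ls n)) (INR D) /\
      Rle (INR D) (Rmult C (pow Ls n)).

(* Cubical IGS R(d,L,s).  Coordinates {1..L} are encoded as 'I_L
   (value c-1), sheets {1..s} as 'I_s (value sheet-1). Type t_j = j : 'I_d. *)
Definition cube_sym (d L s : nat) : finType := ({ffun 'I_d -> 'I_L} * 'I_s)%type.

Definition agree_off {d L s} (j : 'I_d) (w v : cube_sym d L s) : bool :=
  [forall i, (i != j) ==> (w.1 i == v.1 i)].

Definition cube_edge {d L s} (j : 'I_d) (w v : cube_sym d L s) : bool :=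
  agree_off j w v && (val (v.1 j) == (val (w.1 j)).+1).

Definition cube_glue {d L s} (j : 'I_d) (w v : cube_sym d L s) : bool :=
  [&& agree_off j w v, val (w.1 j) == L.-1, val (v.1 j) == 0 & w.2 == v.2].

Definition cube_igs d L s (hd : 0 < d) : igs 'I_d :=
  @IGS 'I_d (cube_sym d L s)
    (fun w v => [exists j, cube_edge j w v])
    (fun w v => odflt (Ordinal hd) [pick j | cube_edge j w v])
    (fun j w v => cube_glue j w v).

Definition star {d L s} (j : 'I_d) (x : cube_sym d L s) : bool :=
  [forall i, (i != j) ==> ((val (x.1 i) == 0) || (val (x.1 i) == L.-1))]
  && (val x.2 == 0).

Definition cube_eta {d L s} (j : 'I_d) (x : cube_sym d L s) : cube_sym d L s :=
  ([ffun i => if i == j then rev_ord (x.1 i) else x.1 i], x.2).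
Definition cube_alphap {d L s} (j k : 'I_d) (x : cube_sym d L s) : cube_sym d L s :=
  ([ffun i => if i == j then x.1 k else if i == k then x.1 j else x.1 i], x.2).
Definition cube_alpham {d L s} (j k : 'I_d) (x : cube_sym d L s) : cube_sym d L s :=
  ([ffun i => if i == k then rev_ord (x.1 j)
              else if i == j then rev_ord (x.1 k) else x.1 i], x.2).

Definition cube_G {d L s} (a : cube_sym d L s -> cube_sym d L s) : Prop :=
  (exists j, a =1 cube_eta j) \/
  (exists j k, j != k /\ (a =1 cube_alphap j k \/ a =1 cube_alpham j k)).

(* G is a cubical IGS, realised as a sub-system of R(d,L,s) via the
   inclusion iota (S(G) ⊆ S' is modelled by an injective iota). *)
Definition cubical d L s (hd : 0 < d) (G : igs 'I_d)
    (iota : sym G -> cube_sym d L s) : Prop :=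
  is_igs G /\ injective iota /\ is_mapping G (cube_igs d L s hd) iota /\
  (forall j (x : cube_sym d L s), star j x -> exists y, iota y = x) /\
  (forall j (w v : sym G), star j (iota w) -> star j (iota v) ->
     agree_off j (iota w) (iota v) ->
     val ((iota v).1 j) = (val ((iota w).1 j)).+1 -> edge G w v) /\
  (forall j (w v : sym G), star j (iota w) -> star j (iota v) ->
     agree_off j (iota w) (iota v) ->
     val ((iota w).1 j) = L.-1 -> val ((iota v).1 j) = 0 -> glue G j w v) /\
  (forall a, cube_G a -> exists b : sym G -> sym G,
     (forall x, iota (b x) = a (iota x)) /\ is_iso G G b).

(* Sierpinski gasket: symbols 0,1,2; types a,b,c = 0,1,2. *)
Definition gasket_edge : rel 'I_3 := fun x y =>
  [|| (val x == 0) && (val y == 1), (val x == 1) && (val y == 2)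
    | (val x == 0) && (val y == 2)].
Definition gasket_type (x y : 'I_3) : 'I_3 :=
  if (val x == 0) && (val y == 1) then inord 0
  else if (val x == 1) && (val y == 2) then inord 1 else inord 2.
Definition gasket_glue (t : 'I_3) : rel 'I_3 := fun x y =>
  if val t == 0 then (val x == 1) && (val y == 0)
  else if val t == 1 then (val x == 2) && (val y == 1)
  else (val x == 2) && (val y == 0).
Definition gasket : igs 'I_3 := @IGS 'I_3 'I_3 gasket_edge gasket_type gasket_glue.

(* Pentagonal Sierpinski carpet: symbols 0..4; types a..e = 0..4.
   E = {(i, i+1 mod 5)} with type i;
   I_i = {(i+1, i), (i+2, i+4)} (mod 5). *)
Definition carpet_edge : rel 'I_5 := fun x y => val y == (val x).+1 %% 5.
Definition carpet_type (x y : 'I_5) : 'I_5 := x.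
Definition carpet_glue (t : 'I_5) : rel 'I_5 := fun x y =>
  ((val x == (val t).+1 %% 5) && (val y == val t))
  || ((val x == (val t + 2) %% 5) && (val y == (val t + 4) %% 5)).
Definition carpet : igs 'I_5 := @IGS 'I_5 'I_5 carpet_edge carpet_type carpet_glue.

(* Main.v *)
Require Import Defs.
From Stdlib Require Import Reals.
From Stdlib Require Import ClassicalEpsilon.
From mathcomp Require Import all_boot.

Set Implicit Arguments.
Unset Strict Implicit.
Unset Printing Implicit Defensive.

Lemma all2_rev (A B : Type) (r : A -> B -> bool) s t : size s = size t ->
  all2 r (rev s) (rev t) = all2 r s t.
Proof. by move=> Hs; rewrite !all2E !size_rev -rev_zip // all_rev. Qed.

Section Gen.
Variables (T : finType) (G : igs T).
Hypothesis irr : forall x, ~~ edge G x x.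

Lemma redge_refl w : redge G w w = None.
Proof. case: w => //= x w; by rewrite eqxx (negbTE (irr x)). Qed.

Lemma redge_cat a a' b b' : size a = size a' ->
  redge G (a ++ b) (a' ++ b') =
  if b == b' then redge G a a'
  else obind (fun t => if all2 (glue G t) a a' then Some t else None) (redge G b b').
Proof.
elim: a a' => [|x a IH] [|y a'] //=.
- move=> _; case Hb: (b == b'); first by move/eqP: Hb => ->; rewrite redge_refl.
  by case: (redge G b b').
- move=> [Hs]; rewrite eqseq_cat // IH //.
  case Hb: (b == b'); first by rewrite andbT.
  rewrite andbF /=. case: (redge G b b') => //= t.
  by case: (all2 (glue G t) a a'); case: (glue G t x y).
Qed.

Definition ctup m (a : sym G) (w : m.-tuple (sym G)) : m.+1.-tuple (sym G) :=
  [tuple of a :: w].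

Lemma rev_ctup m a (w : m.-tuple (sym G)) : rev (ctup a w) = rev w ++ [:: a].
Proof. by rewrite /= rev_cons cats1. Qed.

Lemma rg_edge_cons m a b (w v : m.-tuple (sym G)) :
  rg_edge G m.+1 (ctup a w) (ctup b v) =
  if a == b then rg_edge G m w v
  else edge G a b && all2 (glue G (etype G a b)) w v.
Proof.
rewrite /rg_edge !rev_ctup redge_cat ?size_rev ?size_tuple //.
have -> : ([:: a] == [:: b]) = (a == b) by apply/eqP/eqP => [[]|->].
case: (a =P b) => // _ /=.
case: (edge G a b) => //=.
by rewrite all2_rev ?size_tuple //; case: all2.
Qed.

Lemma rg_adj_cons m a b (w v : m.-tuple (sym G)) :
  rg_adj G m.+1 (ctup a w) (ctup b v) =
  if a == b then rg_adj G m w v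
  else (edge G a b && all2 (glue G (etype G a b)) w v) ||
       (edge G b a && all2 (glue G (etype G b a)) v w).
Proof.
rewrite /rg_adj !rg_edge_cons; case Hab: (a == b).
  by move/eqP: Hab => E; subst b; rewrite eqxx.
by rewrite eq_sym Hab.

Qed.

Lemma ctup_eta m (x : m.+1.-tuple (sym G)) : x = ctup (thead x) (behead_tuple x).
Proof. by apply: val_inj; case: x => [[|a s]] //. Qed.

Lemma nseq_ctup m c : nseq_tuple m.+1 c = ctup c (nseq_tuple m c).
Proof. by apply: val_inj. Qed.

Definition reach m k (x y : m.-tuple (sym G)) :=
  exists p, path (rg_adj G m) x p /\ last x p = y /\ size p <= k.

Lemma rg_adj_sym m : symmetric (rg_adj G m).
Proof. by move=> x y; rewrite /rg_adj orbC. Qed.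

Lemma reach_refl m k x : @reach m k x x.
Proof. by exists [::]. Qed.

Lemma reach_mono m k k' x y : k <= k' -> @reach m k x y -> reach k' x y.
Proof. by move=> le [p [P1 [P2 P3]]]; exists p; split => //; split => //; apply: leq_trans le. Qed.

Lemma reach_trans m k1 k2 x y z : @reach m k1 x y -> reach k2 y z -> reach (k1 + k2) x z.
Proof.
move=> [p [P1 [P2 P3]]] [q [Q1 [Q2 Q3]]]; exists (p ++ q).
rewrite cat_path last_cat P1 P2 Q1 Q2 size_cat; split => //; split => //.
exact: leq_add.
Qed.

Lemma reach_sym m k x y : @reach m k x y -> reach k y x.
Proof.
move=> [p [P1 [P2 P3]]]; exists (rev (belast x p)); split.
  rewrite -P2 rev_path; apply: sub_path P1 => u v; by rewrite rg_adj_sym.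
split; last by rewrite size_rev size_belast.
rewrite -P2; case: (p) => [|z q] //=.
by rewrite rev_cons last_rcons.
Qed.

Lemma reach_adj m x y : rg_adj G m x y -> reach 1 x y.
Proof. by move=> H; exists [:: y]; rewrite /= H. Qed.

Lemma reach_cons m k a (x y : m.-tuple (sym G)) :
  reach k x y -> reach k (ctup a x) (ctup a y).
Proof.
move=> [p [P1 [P2 P3]]]; exists (map (ctup a) p); rewrite size_map last_map P2.
split => //; rewrite path_map; apply: sub_path P1 => u v /=.
by rewrite rg_adj_cons eqxx.
Qed.

End Gen.

From Stdlib Require Import Classical.

Lemma diam_exists (T : finType) (G : igs T) m (U K : nat) :
  (forall x y, @reach _ G m U x y) ->
  (exists x0 y0 : m.-tuple (sym G), forall p, path (rg_adj G m) x0 p -> last x0 p = y0 -> K <= size p) ->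
  exists D, is_diam G m D /\ K <= D /\ D <= U.
Proof.
move=> HU [x0 [y0 HK]].
suff: forall k, (forall x y, @reach _ G m k x y) -> exists D, is_diam G m D /\ K <= D /\ D <= k.
  by move/(_ U HU).
elim=> [|k IH] Hk.
- exists 0; split; last first.
    split => //; have [p [P1 [P2 P3]]] := Hk x0 y0.
    by have := HK p P1 P2; case: p P3 {P1 P2}.
  split; first by move=> x y; have [p [P1 [P2 P3]]] := Hk x y; exists p.
  by exists x0, x0.
- case: (classic (forall x y, @reach _ G m k x y)) => [Hk'|Hn].
    by have [D [HD [H1 H2]]] := IH Hk'; exists D; do 2 split => //; apply: leq_trans H2 _.
  exists k.+1; split; last first.
    split => //; have [p [P1 [P2 P3]]] := Hk x0 y0.
    by apply: leq_trans (HK p P1 P2) P3.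
  split; first by move=> x y; have [p [P1 [P2 P3]]] := Hk x y; exists p.
  have [x Hx] := not_all_ex_not _ _ Hn.
  have [y Hy] := not_all_ex_not _ _ Hx.
  exists x, y => p P1 P2; rewrite leqNgt; apply/negP => Hlt; apply: Hy.
  by exists p.
Qed.

Lemma INR_expn a n : INR (a ^ n) = pow (INR a) n.
Proof. elim: n => [|n IH] //=; by rewrite expnS mult_INR IH. Qed.

Lemma estimate_of (T : finType) (G : igs T) (Ls A B : nat) :
  2 <= Ls -> 0 < A ->
  (forall n, 0 < n -> exists D, is_diam G n D /\ Ls ^ n <= A * D /\ D <= B * Ls ^ n) ->
  diam_estimate G.
Proof.
move=> HLs HA H.
have HC : Rle 1 (INR (A + B)).
  by rewrite -/(INR 1); apply: le_INR; apply/leP; rewrite (leq_trans HA) // leq_addr.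
exists (INR (A + B)), (INR Ls); split => //; split.
  by rewrite -/(INR 1); apply: lt_INR; apply/ltP.
move=> n Hn; have [D [HD [H1 H2]]] := H n Hn; exists D; split => //.
have Cpos : Rlt 0 (INR (A + B)) by apply: Rlt_le_trans HC; apply: Rlt_0_1.
rewrite -INR_expn; split.
- apply: (Rmult_le_reg_l (INR (A + B))) => //.
  rewrite -Rmult_assoc Rinv_r; last by apply: Rgt_not_eq.
  rewrite Rmult_1_l -mult_INR; apply: le_INR; apply/leP.
  by apply: leq_trans H1 _; rewrite leq_mul2r leq_addr orbT.
- rewrite -mult_INR; apply: le_INR; apply/leP.
  by apply: leq_trans H2 _; rewrite leq_mul2r leq_addl orbT.
Qed.

From mathcomp Require Import zify.

Lemma all2_nseq (A B : Type) (r : A -> B -> bool) n x y :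
  all2 r (nseq n x) (nseq n y) = (n == 0) || r x y.
Proof. elim: n => [|n IH] //=; rewrite IH; by case: (r x y); rewrite ?orbT. Qed.

Lemma short_path (V : finType) (e : rel V) x y : connect e x y ->
  exists p, [/\ path e x p, last x p = y & size p < #|V|].
Proof.
move/connectP => [p P1 ->].
case: (shortenP P1) => q Q1 Q2 _.
exists q; split => //.
move/card_uniqP: Q2 => Hs.
by have := max_card (mem (x :: q)); rewrite Hs.
Qed.

Section Upper.
Variables (T : finType) (G : igs T).
Hypothesis irr : forall x, ~~ edge G x x.
Variables (H : pred (sym G)) (c0 : sym G) (Ls E : nat).
Hypothesis Hc0 : H c0.
Hypothesis HLs : 2 <= Ls.
Hypothesis Hglue : forall x y, edge G x y ->
  exists p q, [/\ H p, H q & glue G (etype G x y) p q].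
Hypothesis Hconn : forall a, connect (undirected G) a c0.
Hypothesis HE : forall n h g, H h -> H g ->
  reach (E * Ls ^ n) (nseq_tuple n h) (nseq_tuple n g).

Lemma cross_adj n a b p q : edge G a b -> glue G (etype G a b) p q ->
  rg_adj G n.+1 (ctup a (nseq_tuple n p)) (ctup b (nseq_tuple n q)).
Proof.
move=> Hab Hg; rewrite (rg_adj_cons irr).
have -> : (a == b) = false.
  by apply/negbTE; apply/eqP => E'; move: Hab; rewrite E' (negbTE (irr b)).
by rewrite Hab /= all2_nseq Hg orbT.
Qed.

Lemma walk_bound n (p : seq (sym G)) : forall a h, H h ->
  path (undirected G) a p -> last a p = c0 ->
  reach (size p * (E * Ls ^ n + 1) + E * Ls ^ n)
     (ctup a (nseq_tuple n h)) (ctup c0 (nseq_tuple n c0)).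
Proof.
elim: p => [|b p IH] a h Hh /=.
  by move=> _ ->; rewrite mul0n add0n; apply: (reach_cons irr); apply: HE.
move=> /andP [Hab Pp] Lp.
have Hstep : exists u v, [/\ H u, H v & rg_adj G n.+1 (ctup a (nseq_tuple n u)) (ctup b (nseq_tuple n v))].
  case/orP: Hab => Hab.
    have [u [v [Hu Hv Hg]]] := Hglue Hab; exists u, v; split => //.
    exact: cross_adj.
  have [u [v [Hu Hv Hg]]] := Hglue Hab; exists v, u; split => //.
  by rewrite rg_adj_sym; apply: cross_adj.
have [u [v [Hu Hv Hadj]]] := Hstep.
have R1 := reach_cons irr a (HE n Hh Hu).
have R2 := reach_adj Hadj.
have R3 := IH b v Hv Pp Lp.
apply: reach_mono (reach_trans R1 (reach_trans R2 R3)).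
rewrite /=; lia.
Qed.

Definition Pb := #|sym G|.
Definition Bb := (Pb + 1) * (E + 1).

Lemma upper_c0 n (x : n.-tuple (sym G)) : reach (Bb * Ls ^ n) x (nseq_tuple n c0).
Proof.
elim: n x => [|n IH] x.
  by rewrite (tuple0 x) (tuple0 (nseq_tuple 0 c0)); apply: reach_refl.
rewrite (ctup_eta x) nseq_ctup.
set a := thead x; set x' := behead_tuple x.
have R1 := reach_cons irr a (IH x').
have [p [P1 P2 P3]] := short_path (Hconn a).
have R2 := walk_bound n Hc0 P1 P2.
apply: reach_mono (reach_trans R1 R2).
have HL : 1 <= Ls ^ n by rewrite expn_gt0 (ltnW HLs).
rewrite expnS /Bb /Pb.
have : size p <= #|sym G| by apply: ltnW.
move: (Ls ^ n) HL => Z HL Hp.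
nia.
Qed.

Lemma upper_all n (x y : n.-tuple (sym G)) : reach (2 * Bb * Ls ^ n) x y.
Proof.
apply: reach_mono (reach_trans (upper_c0 x) (reach_sym (upper_c0 y))).
lia.
Qed.

End Upper.

Lemma lip_path (V : Type) (e : rel V) (f : V -> nat) :
  (forall x y, e x y -> f y <= (f x).+1) ->
  forall x p, path e x p -> f (last x p) <= f x + size p.
Proof.
move=> Hf x p; elim: p x => [|y p IH] x /=; first by rewrite addn0.
move=> /andP [Hxy Hp]; have := IH y Hp; have := Hf _ _ Hxy; lia.
Qed.

Lemma lip_lower (T : finType) (G : igs T) m (f : m.-tuple (sym G) -> nat) x0 y0 K :
  (forall x y, rg_adj G m x y -> f y <= (f x).+1) ->
  f x0 + K <= f y0 ->
  forall p, path (rg_adj G m) x0 p -> last x0 p = y0 -> K <= size p.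
Proof.
move=> Hf HK p Pp Lp; have := lip_path Hf Pp; rewrite Lp; lia.
Qed.

Section Lower.
Variables (T : finType) (G : igs T) (L : nat) (phi : sym G -> nat) (del : T -> nat).
Hypothesis H1 : forall x y, edge G x y -> phi y = phi x + del (etype G x y).
Hypothesis H2 : forall t x y, glue G t x y -> phi x + del t = L * del t + phi y.
Hypothesis Hdel : forall t, del t <= 1.

Fixpoint Fl (w : seq (sym G)) : nat := if w is x :: w' then L * Fl w' + phi x else 0.

Lemma Fl_edge w v t : redge G w v = Some t -> Fl v = Fl w + del t.
Proof.
elim: w v t => [|x w IH] [|y v] t //=.
case: ifP => [/eqP <-|_].
  case: ifP => // Hxy [<-]; by rewrite (H1 Hxy) addnA.
case Hr: (redge G w v) => [t'|] //.
case: ifP => // Hg [Et]; subst t'.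
rewrite (IH _ _ Hr) mulnDr; have := H2 Hg; lia.
Qed.

Definition Ft m (w : m.-tuple (sym G)) := Fl (rev w).

Lemma Ft_lip m (x y : m.-tuple (sym G)) : rg_adj G m x y -> Ft y <= (Ft x).+1.
Proof.
rewrite /rg_adj /rg_edge /Ft.
case/orP; case Hr: redge => [t|] // _; have := Fl_edge Hr; have := Hdel t; lia.
Qed.

Lemma Fl_nseq n x : phi x = L.-1 -> 0 < L -> Fl (nseq n x) = (L ^ n).-1.
Proof.
move=> Hx HL; elim: n => [|n IH] //=; rewrite IH Hx expnS.
have : 0 < L ^ n by rewrite expn_gt0 HL.
move: (L ^ n) => Z; nia.
Qed.

Lemma Fl_nseq0 n x : phi x = 0 -> Fl (nseq n x) = 0.
Proof. by move=> Hx; elim: n => [|n IH] //=; rewrite IH Hx muln0. Qed.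

Lemma lower_lin m x y : phi x = 0 -> phi y = L.-1 -> 0 < L ->
  forall p, path (rg_adj G m) (nseq_tuple m x) p -> last (nseq_tuple m x) p = nseq_tuple m y ->
  (L ^ m).-1 <= size p.
Proof.
move=> Hx Hy HL; apply: (lip_lower (f := @Ft m)); first exact: Ft_lip.
by rewrite /Ft /= !rev_nseq (Fl_nseq0 _ Hx) (Fl_nseq _ Hy HL).
Qed.

End Lower.

Lemma const_adj (T : finType) (G : igs T) (irr : forall x, ~~ edge G x x) h g :
  edge G h g -> glue G (etype G h g) g h ->
  forall n, reach (2 ^ n).-1 (nseq_tuple n h) (nseq_tuple n g).
Proof.
move=> Hhg Hg; elim=> [|n IH].
  by rewrite (tuple0 (nseq_tuple 0 h)) (tuple0 (nseq_tuple 0 g)); apply: reach_refl.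
rewrite !nseq_ctup.
have R1 := reach_cons irr h IH.
have R2 := reach_adj (cross_adj irr n Hhg Hg).
have R3 := reach_cons irr g IH.
apply: reach_mono (reach_trans R1 (reach_trans R2 R3)).
have : 0 < 2 ^ n by rewrite expn_gt0.
rewrite expnS; move: (2 ^ n) => Z; lia.
Qed.

Ltac gsimp := rewrite /= /gasket_glue /gasket_type /gasket_edge /= ?inordK.

Lemma gasket_irr (x : sym gasket) : ~~ edge gasket x x.
Proof. by case: x => [[|[|[|?]]] ?]. Qed.

Lemma gasket_glue_rev (x y : sym gasket) : edge gasket x y -> glue gasket (etype gasket x y) y x.
Proof. case: x => [[|[|[|?]]] ?] //; case: y => [[|[|[|?]]] ?] //; by gsimp. Qed.

Lemma gasket_adj (x y : sym gasket) : x != y ->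
  edge gasket x y \/ edge gasket y x.
Proof. by case: x => [[|[|[|?]]] ?] //; case: y => [[|[|[|?]]] ?] //; auto. Qed.

Definition g0 : sym gasket := @Ordinal 3 0 isT.
Definition g1 : sym gasket := @Ordinal 3 1 isT.

Lemma gasket_conn (a : sym gasket) : connect (undirected gasket) a g0.
Proof.
case: a => [[|[|[|?]]] Hi] //.
- by have -> : Ordinal Hi = g0 by apply: val_inj.
- by apply: connect1.
- by apply: connect1.
Qed.

Lemma gasket_E n (h g : sym gasket) : reach (1 * 2 ^ n) (nseq_tuple n h) (nseq_tuple n g).
Proof.
case: (eqVneq h g) => [<-|nhg]; first exact: reach_refl.
apply: reach_mono (_ : (2 ^ n).-1 <= 1 * 2 ^ n) _; first by rewrite mul1n leq_pred.
case: (gasket_adj nhg) => He.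
  exact: (const_adj gasket_irr He (gasket_glue_rev He)).
apply: reach_sym; exact: (const_adj gasket_irr He (gasket_glue_rev He)).
Qed.

Definition gphi (x : sym gasket) : nat := if val x == 0 then 0 else 1.
Definition gdel (t : 'I_3) : nat := if val t == 1 then 0 else 1.

Lemma gasket_H1 (x y : sym gasket) : edge gasket x y -> gphi y = gphi x + gdel (etype gasket x y).
Proof. case: x => [[|[|[|?]]] ?] //; case: y => [[|[|[|?]]] ?] //; gsimp; rewrite /gdel /= ?inordK //. Qed.

Lemma gasket_H2 t (x y : sym gasket) : glue gasket t x y -> gphi x + gdel t = 2 * gdel t + gphi y.
Proof. by case: t => [[|[|[|?]]] ?] //; case: x => [[|[|[|?]]] ?] //; case: y => [[|[|[|?]]] ?]. Qed.

Lemma gasket_est : diam_estimate gasket.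
Proof.
apply: (@estimate_of _ _ 2 2 (2 * Bb gasket 1)) => // n Hn.
have HU := upper_all gasket_irr (H := predT) (c0 := g0) (Ls := 2) (E := 1) isT (leqnn 2)
   (fun x y Hxy => ex_intro _ y (ex_intro _ x (And3 isT isT (gasket_glue_rev Hxy))))
   gasket_conn (fun n h g _ _ => gasket_E n h g) (n := n).
have HL := lower_lin (L := 2) (phi := gphi) (del := gdel) gasket_H1 gasket_H2
   (fun t => ltac:(by rewrite /gdel; case: ifP)) (m := n) (x := g0) (y := g1) erefl erefl isT.
have [D [HD [H1 H2]]] := diam_exists HU (ex_intro _ _ (ex_intro _ _ HL)).
exists D; split => //; split => //.
have : 2 <= 2 ^ n by rewrite -{1}(expn1 2) leq_exp2l.
move: (2 ^ n) H1 => Z; lia.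
Qed.

Definition pb (P : Prop) : bool := if excluded_middle_informative P then true else false.
Lemma pbP (P : Prop) : reflect P (pb P).
Proof. by rewrite /pb; case: excluded_middle_informative => H; constructor. Qed.

Definition lipf (T : finType) (G : igs T) m (f : m.-tuple (sym G) -> nat) :=
  forall x y, rg_adj G m x y -> f y <= (f x).+1.

Lemma lip_min (T : finType) (G : igs T) m (f g : m.-tuple (sym G) -> nat) :
  lipf f -> lipf g -> lipf (fun x => minn (f x) (g x)).
Proof. move=> Hf Hg x y Hxy; have := Hf _ _ Hxy; have := Hg _ _ Hxy; lia. Qed.

Lemma lip_add (T : finType) (G : igs T) m c (f : m.-tuple (sym G) -> nat) :
  lipf f -> lipf (fun x => c + f x).
Proof. move=> Hf x y Hxy; have := Hf _ _ Hxy; lia. Qed.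

Lemma lip_const (T : finType) (G : igs T) m c : lipf (fun x : m.-tuple (sym G) => c).
Proof. by move=> x y _. Qed.

Section Dist.
Variables (T : finType) (G : igs T) (m : nat).
Implicit Types (S : pred (m.-tuple (sym G))) (w : m.-tuple (sym G)).

Definition reachS S k w :=
  exists p, [/\ path (rg_adj G m) w p, S (last w p) & size p <= k].

Definition dS S w : nat :=
  match excluded_middle_informative (exists k, pb (reachS S k w)) with
  | left H => @ex_minn (fun k => pb (reachS S k w)) H
  | right _ => 0
  end.

Lemma dS_spec S w : (exists k, reachS S k w) -> reachS S (dS S w) w.
Proof.
move=> [k Hk]; rewrite /dS; case: excluded_middle_informative => [H|H].
  by case: ex_minnP => j /pbP.
by exfalso; apply: H; exists k; apply/pbP.
Qed.

Lemma dS_min S w k : reachS S k w -> dS S w <= k.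
Proof.
move=> Hk; rewrite /dS; case: excluded_middle_informative => [H|H] //.
by case: ex_minnP => j _ /(_ k); apply; apply/pbP.
Qed.

Lemma dS0 S w : S w -> dS S w = 0.
Proof. by move=> Hw; apply/eqP; rewrite -leqn0; apply: dS_min; exists [::]. Qed.

Lemma dS_lip S : (forall w, exists k, reachS S k w) -> lipf (dS S).
Proof.
move=> Hex x y Hxy; have [p [P1 P2 P3]] := dS_spec (Hex x).
apply: dS_min; exists (x :: p); split => //=.
  by rewrite rg_adj_sym Hxy.
Qed.

Lemma dS_lower S w K : (exists k, reachS S k w) ->
  (forall p, path (rg_adj G m) w p -> S (last w p) -> K <= size p) -> K <= dS S w.
Proof. by move=> Hex HK; have [p [P1 P2 P3]] := dS_spec Hex; apply: leq_trans (HK p P1 P2) P3. Qed.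

Lemma dS_auto (F : m.-tuple (sym G) -> m.-tuple (sym G)) S1 S2 w :
  (forall x, F (F x) = x) -> (forall x y, rg_adj G m (F x) (F y) = rg_adj G m x y) ->
  (forall z, S2 z = S1 (F z)) ->
  (forall w, exists k, reachS S1 k w) -> (forall w, exists k, reachS S2 k w) ->
  dS S1 (F w) = dS S2 w.
Proof.
move=> FF FA HS E1 E2.
have Pm : forall x p, path (rg_adj G m) x p -> path (rg_adj G m) (F x) (map F p).
  move=> x p Hp; rewrite path_map; apply: sub_path Hp => u v /=; by rewrite FA.
apply/eqP; rewrite eqn_leq; apply/andP; split.
  have [p [P1 P2 P3]] := dS_spec (E2 w).
  apply: dS_min; exists (map F p); split; first exact: Pm.
    by rewrite last_map -HS.
  by rewrite size_map.
have [p [P1 P2 P3]] := dS_spec (E1 (F w)).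
apply: dS_min; exists (map F p); split.
- by rewrite -{1}(FF w); apply: Pm.
- by rewrite -{1}(FF w) last_map HS FF.
- by rewrite size_map.
Qed.

End Dist.

Section Auto.
Variables (T : finType) (G : igs T) (f : sym G -> sym G) (g : T -> T).
Hypothesis finj : injective f.

Lemma redge_map_fwd :
  (forall x y, edge G (f x) (f y) = edge G x y) ->
  (forall x y, edge G x y -> etype G (f x) (f y) = g (etype G x y)) ->
  (forall t x y, glue G (g t) (f x) (f y) = glue G t x y) ->
  forall w v, redge G (map f w) (map f v) = omap g (redge G w v).
Proof.
move=> He Ht Hg; elim=> [|x w IH] [|y v] //=.
rewrite (inj_eq (inj_map finj)) He.
case: (w == v); first by case Hxy: (edge G x y) => //=; rewrite Ht.
rewrite IH; case: (redge G w v) => [t|] //=.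
by rewrite Hg; case: (glue G t x y).
Qed.

Lemma redge_map_rev :
  (forall x y, edge G (f x) (f y) = edge G y x) ->
  (forall x y, edge G y x -> etype G (f x) (f y) = g (etype G y x)) ->
  (forall t x y, glue G (g t) (f x) (f y) = glue G t y x) ->
  forall w v, redge G (map f w) (map f v) = omap g (redge G v w).
Proof.
move=> He Ht Hg; elim=> [|x w IH] [|y v] //=.
rewrite (inj_eq (inj_map finj)) He eq_sym.
case: (v == w); first by case Hxy: (edge G y x) => //=; rewrite Ht.
rewrite IH; case: (redge G v w) => [t|] //=.
by rewrite Hg; case: (glue G t y x).
Qed.

Lemma rg_adj_map_fwd m :
  (forall x y, edge G (f x) (f y) = edge G x y) ->
  (forall x y, edge G x y -> etype G (f x) (f y) = g (etype G x y)) ->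
  (forall t x y, glue G (g t) (f x) (f y) = glue G t x y) ->
  forall (w v : m.-tuple (sym G)), rg_adj G m (map_tuple f w) (map_tuple f v) = rg_adj G m w v.
Proof.
move=> He Ht Hg w v; rewrite /rg_adj /rg_edge /= -!map_rev !(redge_map_fwd He Ht Hg).
by case: (redge G _ _); case: (redge G _ _).
Qed.

Lemma rg_adj_map_rev m :
  (forall x y, edge G (f x) (f y) = edge G y x) ->
  (forall x y, edge G y x -> etype G (f x) (f y) = g (etype G y x)) ->
  (forall t x y, glue G (g t) (f x) (f y) = glue G t y x) ->
  forall (w v : m.-tuple (sym G)), rg_adj G m (map_tuple f w) (map_tuple f v) = rg_adj G m w v.
Proof.
move=> He Ht Hg w v; rewrite /rg_adj /rg_edge /= -!map_rev !(redge_map_rev He Ht Hg).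
by case: (redge G _ _); case: (redge G _ _).
Qed.

End Auto.

Definition r1 (x : 'I_5) : 'I_5 := Ordinal (ltn_pmod x.+1 (isT : 0 < 5)).
Definition sg0 (x : 'I_5) : 'I_5 := Ordinal (ltn_pmod (6 - x) (isT : 0 < 5)).
Definition gg0 (t : 'I_5) : 'I_5 := Ordinal (ltn_pmod (5 - t) (isT : 0 < 5)).
Definition r4 (x : 'I_5) := r1 (r1 (r1 (r1 x))).
Ltac c5 x := case: x => [[|[|[|[|[|?]]]]] ?].

Definition k0 : 'I_5 := @Ordinal 5 0 isT.
Definition k1 : 'I_5 := @Ordinal 5 1 isT.
Definition k2 : 'I_5 := @Ordinal 5 2 isT.
Definition k3 : 'I_5 := @Ordinal 5 3 isT.
Definition k4 : 'I_5 := @Ordinal 5 4 isT.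

Lemma r1E : (r1 k0 = k1) * (r1 k1 = k2) * (r1 k2 = k3) * (r1 k3 = k4) * (r1 k4 = k0).
Proof. by do ! split; apply: val_inj. Qed.

Lemma r1K : cancel r1 r4.
Proof. by move=> x; c5 x => //; apply: val_inj. Qed.
Lemma r1_inj : injective r1.
Proof. exact: can_inj r1K. Qed.
Lemma sg0K : involutive sg0.
Proof. by move=> x; c5 x => //; apply: val_inj. Qed.
Lemma sg0_inj : injective sg0.
Proof. exact: inv_inj sg0K. Qed.

Lemma carpet_irr (x : sym carpet) : ~~ edge carpet x x.
Proof. by c5 x. Qed.

Lemma carpet_glue_rev (x y : sym carpet) :
  edge carpet x y -> glue carpet (etype carpet x y) y x.
Proof. by c5 x => //; c5 y. Qed.

Lemma carpet_edge_r1 (a b : sym carpet) : edge carpet a b -> b = r1 a.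
Proof. by move=> /eqP H; apply: val_inj. Qed.

Lemma carpet_conn (a : sym carpet) : connect (undirected carpet) a k0.
Proof.
case: a => [[|[|[|[|[|?]]]]] Hi] //.
- by rewrite (_ : Ordinal Hi = k0); [exact: connect0 | apply: val_inj].
- by apply: connect1.
- by apply: (@connect_trans _ _ k1); apply: connect1.
- by apply: (@connect_trans _ _ k4); apply: connect1.
- by apply: connect1.
Qed.

Definition near (x y : sym carpet) := [|| x == y, edge carpet x y | edge carpet y x].
Definition mid (h g : sym carpet) : sym carpet :=
  if val g == (val h + 2) %% 5 then r1 h
  else if val g == (val h + 3) %% 5 then r4 h else g.

Lemma mid_near h g : near h (mid h g) && near (mid h g) g.
Proof. by c5 h => //; c5 g. Qed.

Lemma near_reach n x y : near x y -> reach (2 ^ n).-1 (nseq_tuple n x) (nseq_tuple n y).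
Proof.
case/or3P => [/eqP ->|He|He]; first exact: reach_refl.
  exact: (const_adj carpet_irr He (carpet_glue_rev He)).
apply: reach_sym; exact: (const_adj carpet_irr He (carpet_glue_rev He)).
Qed.

Lemma carpet_E n (h g : sym carpet) : reach (2 * 2 ^ n) (nseq_tuple n h) (nseq_tuple n g).
Proof.
have /andP [N1 N2] := mid_near h g.
apply: reach_mono (reach_trans (near_reach n N1) (near_reach n N2)).
have : 0 < 2 ^ n by rewrite expn_gt0.
move: (2 ^ n) => Z; lia.
Qed.

Lemma carpet_Hglue (x y : sym carpet) : edge carpet x y ->
  exists p q, [/\ predT p, predT q & glue carpet (etype carpet x y) p q].
Proof. by move=> H; exists y, x; split => //; apply: carpet_glue_rev. Qed.

Lemma carpet_upper n (x y : n.-tuple (sym carpet)) :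
  reach (2 * Bb carpet 2 * 2 ^ n) x y.
Proof.
exact: (upper_all carpet_irr (H := predT) (c0 := k0) (Ls := 2) (E := 2) isT (leqnn 2)
   carpet_Hglue carpet_conn (fun n h g _ _ => carpet_E n h g)).
Qed.

Lemma r1_edge (x y : sym carpet) : edge carpet (r1 x) (r1 y) = edge carpet x y.
Proof. by c5 x => //; c5 y. Qed.
Lemma r1_glue t (x y : sym carpet) : glue carpet (r1 t) (r1 x) (r1 y) = glue carpet t x y.
Proof. by c5 t => //; c5 x => //; c5 y. Qed.
Lemma sg0_edge (x y : sym carpet) : edge carpet (sg0 x) (sg0 y) = edge carpet y x.
Proof. by c5 x => //; c5 y. Qed.
Lemma sg0_type (x y : sym carpet) : edge carpet y x ->
  etype carpet (sg0 x) (sg0 y) = gg0 (etype carpet y x).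
Proof. by c5 x => //; c5 y => // _; apply: val_inj. Qed.
Lemma sg0_glue t (x y : sym carpet) : glue carpet (gg0 t) (sg0 x) (sg0 y) = glue carpet t y x.
Proof. by c5 t => //; c5 x => //; c5 y. Qed.

Lemma r1_adj m (w v : m.-tuple (sym carpet)) :
  rg_adj carpet m (map_tuple r1 w) (map_tuple r1 v) = rg_adj carpet m w v.
Proof. exact: (rg_adj_map_fwd (G := carpet) (g := r1) r1_inj r1_edge (fun x y _ => erefl) r1_glue). Qed.

Lemma sg0_adj m (w v : m.-tuple (sym carpet)) :
  rg_adj carpet m (map_tuple sg0 w) (map_tuple sg0 v) = rg_adj carpet m w v.
Proof. exact: (rg_adj_map_rev (G := carpet) sg0_inj sg0_edge sg0_type sg0_glue). Qed.

Definition side (i : 'I_5) (w : seq 'I_5) := all (fun x => (x == i) || (x == r1 i)) w.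

Lemma side_r1 i w : side i w -> side (r1 i) (map r1 w).
Proof.
rewrite /side all_map; apply: sub_all => x /=.
by case/orP => /eqP ->; rewrite eqxx ?orbT.
Qed.

Lemma side_sg0_0 w : side k0 (map sg0 w) = side k0 w.
Proof. rewrite /side all_map; apply: eq_all => x /=; by c5 x. Qed.
Lemma side_sg0_2 w : side k2 (map sg0 w) = side k3 w.
Proof. rewrite /side all_map; apply: eq_all => x /=; by c5 x. Qed.

Lemma side_nseq n i : side i (nseq n i).
Proof. by rewrite /side all_nseq eqxx orbT. Qed.

Lemma glue_side t (x y : sym carpet) : glue carpet t x y ->
  ((x == r1 t) || (x == r1 (r1 t))) && ((y == r4 t) || (y == r1 (r4 t))).
Proof. by c5 t => //; c5 x => //; c5 y. Qed.

Lemma all2_side t (w v : seq (sym carpet)) : all2 (glue carpet t) w v ->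
  side (r1 t) w && side (r4 t) v.
Proof.
elim: w v => [|x w IH] [|y v] //= /andP [Hg H].
have := glue_side Hg; have := IH _ H; rewrite /side.
by case/andP => -> ->; case/andP => -> ->.
Qed.

Lemma glue0_sg0 (x y : sym carpet) : glue carpet k0 x y -> y = sg0 x.
Proof. by c5 x => //; c5 y => // _; apply: val_inj. Qed.

Lemma all2_sg0 (w v : seq (sym carpet)) : all2 (glue carpet k0) w v -> v = map sg0 w.
Proof.
elim: w v => [|x w IH] [|y v] //= /andP [Hg H].
by rewrite (glue0_sg0 Hg) (IH _ H).
Qed.

Definition claim_at n (i : 'I_5) := forall x y : n.-tuple (sym carpet),
  side i x -> side (r1 (r1 i)) y ->
  forall p, path (rg_adj carpet n) x p -> last x p = y -> (2 ^ n).-1 <= size p.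

Lemma claim_rot n i : claim_at n (r1 i) -> claim_at n i.
Proof.
move=> H x y Sx Sy p Pp Lp.
have := H (map_tuple r1 x) (map_tuple r1 y) (side_r1 Sx) (side_r1 Sy) (map (map_tuple r1) p).
rewrite size_map; apply.
  rewrite path_map; apply: sub_path Pp => u v /=; by rewrite r1_adj.
by rewrite last_map Lp.
Qed.

Lemma claim_all n : claim_at n k0 -> forall i, claim_at n i.
Proof.
move=> H0.
have H4 : claim_at n k4 by apply: claim_rot; rewrite r1E.
have H3 : claim_at n k3 by apply: claim_rot; rewrite r1E.
have H2 : claim_at n k2 by apply: claim_rot; rewrite r1E.
have H1 : claim_at n k1 by apply: claim_rot; rewrite r1E.
case=> [[|[|[|[|[|k]]]]] Hi] //.
all: first [ by rewrite (_ : Ordinal Hi = k0) //; apply: val_inj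
           | by rewrite (_ : Ordinal Hi = k1) //; apply: val_inj
           | by rewrite (_ : Ordinal Hi = k2) //; apply: val_inj
           | by rewrite (_ : Ordinal Hi = k3) //; apply: val_inj
           | by rewrite (_ : Ordinal Hi = k4) //; apply: val_inj ].
Qed.

Section CarpetStep.
Variables (n : nat) (d0 d2 d3 : n.-tuple (sym carpet) -> nat).
Local Notation mm := (2 ^ n).-1.
Local Notation TT := (mm + mm + 1).
Hypotheses (L0 : lipf d0) (L2 : lipf d2) (L3 : lipf d3).
Hypothesis Sg0 : forall w, d0 (map_tuple sg0 w) = d0 w.
Hypothesis Sg2 : forall w, d2 (map_tuple sg0 w) = d3 w.
Hypothesis Z0 : forall w : n.-tuple (sym carpet), side k0 w -> d0 w = 0.
Hypothesis Z2 : forall w : n.-tuple (sym carpet), side k2 w -> d2 w = 0.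
Hypothesis Z3 : forall w : n.-tuple (sym carpet), side k3 w -> d3 w = 0.
Hypothesis Low : forall w : n.-tuple (sym carpet), side k2 w || side k3 w -> mm <= d0 w.

Definition phic (a : sym carpet) (w : n.-tuple (sym carpet)) : nat :=
  match val a with
  | 0 => minn (d0 w) (mm + 1 + d3 w)
  | 1 => minn (d0 w) (mm + 1 + d2 w)
  | 3 => TT
  | _ => minn TT (mm + 1 + d0 w)
  end.

Definition Phi (x : n.+1.-tuple (sym carpet)) := phic (thead x) (behead_tuple x).

Lemma Phi_ctup a w : Phi (ctup a w) = phic a w.
Proof. by rewrite /Phi; congr phic; apply: val_inj. Qed.

Lemma phic_lip a : lipf (phic a).
Proof.
rewrite /phic; case: (val a) => [|[|[|[|k]]]].
- exact: (lip_min L0 (lip_add _ L3)).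
- exact: (lip_min L0 (lip_add _ L2)).
- exact: (lip_min (@lip_const _ _ _ _) (lip_add _ L0)).
- exact: lip_const.
- exact: (lip_min (@lip_const _ _ _ _) (lip_add _ L0)).
Qed.

Lemma cross_close a b (w v : n.-tuple (sym carpet)) : edge carpet a b ->
  all2 (glue carpet a) w v ->
  phic b v <= (phic a w).+1 /\ phic a w <= (phic b v).+1.
Proof.
move=> /carpet_edge_r1 -> H; have /andP [Sw Sv] := all2_side H.
move: H Sw Sv; case: a => [[|[|[|[|[|?]]]]] Ha] //.
- rewrite (_ : Ordinal Ha = k0); last by apply: val_inj.
  rewrite /r4 !r1E => /all2_sg0 Ev _ _.
  have -> : v = map_tuple sg0 w by apply: val_inj.
  by rewrite /phic /= Sg0 Sg2.
- rewrite (_ : Ordinal Ha = k1); last by apply: val_inj.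
  rewrite /r4 !r1E => _ Sw Sv.
  have := Low (introT orP (or_introl Sw)); rewrite /phic /= (Z2 Sw) (Z0 Sv).
  move: (d0 w) => Z; lia.
- rewrite (_ : Ordinal Ha = k2); last by apply: val_inj.
  rewrite /r4 !r1E => _ Sw Sv.
  have := Low (introT orP (or_intror Sw)); rewrite /phic /=.
  move: (d0 w) => Z; lia.
- rewrite (_ : Ordinal Ha = k3); last by apply: val_inj.
  rewrite /r4 !r1E => _ Sw Sv.
  have := Low (introT orP (or_introl Sv)); rewrite /phic /=.
  move: (d0 v) => Z; lia.
- rewrite (_ : Ordinal Ha = k4); last by apply: val_inj.
  rewrite /r4 !r1E => _ Sw Sv.
  have := Low (introT orP (or_intror Sv)); rewrite /phic /= (Z0 Sw) (Z3 Sv).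
  move: (d0 v) => Z; lia.
Qed.

Lemma Phi_lip : lipf Phi.
Proof.
move=> x y; rewrite (ctup_eta x) (ctup_eta y) !Phi_ctup (rg_adj_cons carpet_irr).
case Hab: (thead x == thead y).
  by move/eqP: Hab => ->; apply: phic_lip.
case/orP => /andP [He Ha].
  exact: (cross_close He Ha).1.
exact: (cross_close He Ha).2.
Qed.

Lemma step_bound : claim_at n.+1 k0.
Proof.
move=> x y Sx Sy; apply: (lip_lower (f := Phi)); first exact: Phi_lip.
move: Sx Sy; rewrite (ctup_eta x) (ctup_eta y) !Phi_ctup !r1E.
rewrite /side /= -/(side k0 _) -/(side k2 _) !r1E.
case/andP => Ha Sw; case/andP => Hb Sv.
have Ex : phic (thead x) (behead_tuple x) = 0.
  rewrite /phic (Z0 (w := behead_tuple x) Sw); case/orP: Ha => /eqP -> /=; by rewrite min0n.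
have Ey : phic (thead y) (behead_tuple y) = TT.
  have := Low (w := behead_tuple y) (introT orP (or_introl Sv)).
  case/orP: Hb => /eqP -> ; rewrite /phic /=; move: (d0 _) => Z; lia.
rewrite Ex Ey add0n expnS.
have : 0 < 2 ^ n by rewrite expn_gt0.
move: (2 ^ n) => Z; lia.
Qed.

End CarpetStep.

Lemma carpet_ex n (S : pred (n.-tuple (sym carpet))) z : S z ->
  forall w, exists k, reachS S k w.
Proof.
move=> Hz w; have [p [P1 [P2 P3]]] := carpet_upper w z.
by exists (2 * Bb carpet 2 * 2 ^ n), p; split => //; rewrite P2.
Qed.

Lemma claim_n n : forall i, claim_at n i.
Proof.
elim: n => [|n IH].
  by move=> i x y _ _ p _ _; rewrite expn0.
apply: claim_all.
pose S0 := fun w : n.-tuple (sym carpet) => side k0 w.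
pose S2 := fun w : n.-tuple (sym carpet) => side k2 w.
pose S3 := fun w : n.-tuple (sym carpet) => side k3 w.
have E0 : forall w, exists k, reachS S0 k w := carpet_ex (z := nseq_tuple n k0) (side_nseq n k0).
have E2 : forall w, exists k, reachS S2 k w := carpet_ex (z := nseq_tuple n k2) (side_nseq n k2).
have E3 : forall w, exists k, reachS S3 k w := carpet_ex (z := nseq_tuple n k3) (side_nseq n k3).
have FF : forall u : n.-tuple (sym carpet), map_tuple sg0 (map_tuple sg0 u) = u.
  by move=> u; apply: val_inj; rewrite /= (mapK sg0K).
apply: (step_bound (d0 := dS S0) (d2 := dS S2) (d3 := dS S3)).
- exact: dS_lip E0.
- exact: dS_lip E2.
- exact: dS_lip E3.
- move=> w; apply: dS_auto => //; first exact: sg0_adj.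
  by move=> z; rewrite /S0 /= side_sg0_0.
- move=> w; apply: dS_auto => //; first exact: sg0_adj.
  by move=> z; rewrite /S2 /S3 /= side_sg0_2.
- by move=> w Hw; apply: dS0.
- by move=> w Hw; apply: dS0.
- by move=> w Hw; apply: dS0.
- move=> w /orP [Hw|Hw]; apply: dS_lower (E0 w) _ => p Pp Lp.
    have [q [Q1 [Q2 Q3]]] := reach_sym (ex_intro _ p (conj Pp (conj erefl (leqnn (size p))))).
    apply: leq_trans Q3; apply: (IH k0 (last w p) w Lp _ q Q1 Q2).
    by rewrite !r1E.
  by apply: (IH k3 w (last w p) Hw _ p Pp erefl); rewrite !r1E.
Qed.

Lemma carpet_est : diam_estimate carpet.
Proof.
apply: (@estimate_of _ _ 2 2 (2 * Bb carpet 2)) => // n Hn.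
have HL := @claim_n n k0 (nseq_tuple n k0) (nseq_tuple n (r1 (r1 k0))) (side_nseq n k0) (side_nseq n _).
have [D [HD [H1 H2]]] := diam_exists (@carpet_upper n) (ex_intro _ _ (ex_intro _ _ HL)).
exists D; split => //; split => //.
have : 2 <= 2 ^ n by rewrite -{1}(expn1 2) leq_exp2l.
move: (2 ^ n) H1 => Z; lia.
Qed.

Section Cub.
Variables (d L s : nat) (hd : 0 < d) (G : igs 'I_d) (iota : sym G -> cube_sym d L s).
Hypotheses (HL : 3 <= L) (Hs : 0 < s) (Hc : cubical d L s hd G iota).
Variable y0 : sym G.

Lemma cIgs : is_igs G. Proof. by case: Hc. Qed.
Lemma cInj : injective iota. Proof. by case: Hc => _ []. Qed.
Lemma cMap : is_mapping G (cube_igs d L s hd) iota. Proof. by case: Hc => _ [_ []]. Qed.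
Lemma cC1 : forall j (x : cube_sym d L s), star j x -> exists y, iota y = x.
Proof. by case: Hc => _ [_ [_ []]]. Qed.
Lemma cC2 : forall j (w v : sym G), star j (iota w) -> star j (iota v) ->
     agree_off j (iota w) (iota v) ->
     val ((iota v).1 j) = (val ((iota w).1 j)).+1 -> edge G w v.
Proof. by case: Hc => _ [_ [_ [_ []]]]. Qed.
Lemma cC3 : forall j (w v : sym G), star j (iota w) -> star j (iota v) ->
     agree_off j (iota w) (iota v) ->
     val ((iota w).1 j) = L.-1 -> val ((iota v).1 j) = 0 -> glue G j w v.
Proof. by case: Hc => _ [_ [_ [_ [_ []]]]]. Qed.

Lemma irrG (x : sym G) : ~~ edge G x x.
Proof.
case: cIgs => _ [Has _]; apply/negP => Hx.
by have := Has x x Hx; rewrite Hx.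
Qed.

Lemma L0 : 0 < L. Proof. exact: leq_trans HL. Qed.
Definition zL : 'I_L := Ordinal L0.
Definition s0 : 'I_s := Ordinal Hs.
Definition ptn (j : 'I_d) (k : nat) : cube_sym d L s :=
  ([ffun i => if i == j then insubd zL k else zL], s0).
Definition o : cube_sym d L s := ([ffun _ => zL], s0).

Lemma ptn_val j k i : val ((ptn j k).1 i) = if (i == j) && (k < L) then k else 0.
Proof. rewrite /ptn /= ffunE; case: (i == j) => //=; rewrite val_insubd; by case: (k < L). Qed.

Lemma ptn0 j : ptn j 0 = o.
Proof.
rewrite /ptn /o; congr pair; apply/ffunP => i; rewrite !ffunE.
case: (i == j) => //; apply: val_inj; by rewrite val_insubd L0.
Qed.

Lemma star_ptn j k : star j (ptn j k).
Proof.
rewrite /star andbT; apply/forallP => i; apply/implyP => Hij.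
by rewrite ptn_val (negbTE Hij).
Qed.

Lemma agree_ptn j k k' : agree_off j (ptn j k) (ptn j k').
Proof. by apply/forallP => i; apply/implyP => Hij; rewrite /ptn /= !ffunE (negbTE Hij). Qed.

Definition sy x := odflt y0 [pick y | iota y == x].

Lemma sy_ptn j k : iota (sy (ptn j k)) = ptn j k.
Proof.
have [y Hy] := cC1 (star_ptn j k).
rewrite /sy; case: pickP => [z /eqP //|H].
by have := H y; rewrite Hy eqxx.
Qed.

Lemma sy_o : iota (sy o) = o.
Proof. by rewrite -(ptn0 (Ordinal hd)) sy_ptn. Qed.

Lemma C3e j : glue G j (sy (ptn j L.-1)) (sy o).
Proof.
rewrite -(ptn0 j); apply: cC3; rewrite !sy_ptn.
- exact: star_ptn.
- exact: star_ptn.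
- exact: agree_ptn.
- by rewrite ptn_val eqxx ltn_predL L0.
- by rewrite ptn_val eqxx L0.
Qed.

Lemma cube_edge_uniq j k (u v : cube_sym d L s) :
  cube_edge j u v -> cube_edge k u v -> j = k.
Proof.
move=> /andP [Aj Ej] /andP [Ak Ek]; case: (eqVneq j k) => // Hjk.
have := forallP Aj k; rewrite eq_sym Hjk /= => /eqP Euv.
by move: Ek; rewrite Euv; case: (val (v.1 k)) => [|z] /=; rewrite ?eqn_leq ?ltnn ?andbF.
Qed.

Lemma cube_edge_asym j k (u v : cube_sym d L s) :
  cube_edge j u v -> cube_edge k v u -> False.
Proof.
move=> /andP [Aj /eqP Ej] /andP [Ak /eqP Ek]; case: (eqVneq j k) => [E|Hjk].
  subst k; move: Ek; rewrite Ej; lia.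
have := forallP Ak j; rewrite Hjk /= => /eqP Euv.
move: Ej; rewrite Euv => /eqP; by rewrite eqn_leq ltnn andbF.
Qed.

Lemma cub_type x y : edge G x y -> cube_edge (etype G x y) (iota x) (iota y).
Proof.
move=> Hxy; set t := etype G x y.
have Hg : glue G (etype G x y) (sy (ptn t L.-1)) (sy o) := C3e t.
case: cMap => Mi [Mii [Miii Miv]].
case: (Mi _ _ Hxy) => [Heq|[Hf|Hb]].
- by move/cInj: Heq => E; move: Hxy; rewrite E (negbTE (irrG y)).
- have := Miii _ _ Hxy Hf _ _ Hg; rewrite sy_o sy_ptn /=.
  case: pickP => [j Hj|Hn]; last by move: Hf => /existsP [j Hj]; rewrite Hn in Hj.
  move=> /= /and4P [A _ _ _].
  case: (eqVneq j t) => [<-//|Hjt].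
  have := forallP A t; rewrite eq_sym Hjt /= => /eqP /(congr1 val).
  rewrite !ffunE eqxx val_insubd ltn_predL L0 /= => H0; move: HL H0; lia.
- have := Miv _ _ Hxy Hb _ _ Hg; rewrite sy_o sy_ptn /= => /and4P [_ H _ _].
  move: H; rewrite !ffunE /= => /eqP H0; move: HL H0; lia.
Qed.

Lemma cub_glue t x y : glue G t x y -> cube_glue t (iota x) (iota y).
Proof.
move=> Hg; case: cIgs => _ [_ [_ [Hsurj _]]].
have [x0 [y0' [He Et]]] := Hsurj t.
have Ct := cub_type He; rewrite Et in Ct.
case: cMap => Mi [Mii [Miii Miv]].
case: (Mi _ _ He) => [Heq|[Hf|Hb]].
- by move/cInj: Heq => E; move: He; rewrite E (negbTE (irrG y0')).
- have := Miii _ _ He Hf x y; rewrite Et => /(_ Hg) /=.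
  case: pickP => [j Hj|Hn]; last by move: Hf => /existsP [j Hj]; rewrite Hn in Hj.
  by rewrite (cube_edge_uniq Hj Ct).
- by move: Hb => /existsP [j Hj]; case: (cube_edge_asym Ct Hj).
Qed.

Definition j0 : 'I_d := Ordinal hd.
Definition cphi (x : sym G) : nat := val ((iota x).1 j0).
Definition cdel (t : 'I_d) : nat := (t == j0).

Lemma cH1 x y : edge G x y -> cphi y = cphi x + cdel (etype G x y).
Proof.
move=> /cub_type /andP [A /eqP E]; rewrite /cphi /cdel.
case: (eqVneq (etype G x y) j0) => [Et|Hne].
  by rewrite -Et E addn1.
have := forallP A j0; rewrite eq_sym Hne /= => /eqP ->; by rewrite addn0.
Qed.

Lemma cH2 t x y : glue G t x y -> cphi x + cdel t = L * cdel t + cphi y.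
Proof.
move=> /cub_glue /and4P [A /eqP Ex /eqP Ey _]; rewrite /cphi /cdel.
case: (eqVneq t j0) => [Et|Hne].
  rewrite -Et Ex Ey /=; have := L0; lia.
have := forallP A j0; rewrite eq_sym Hne /= => /eqP ->; by rewrite muln0 addn0.
Qed.

Lemma cub_lower n :
  forall p, path (rg_adj G n) (nseq_tuple n (sy o)) p ->
    last (nseq_tuple n (sy o)) p = nseq_tuple n (sy (ptn j0 L.-1)) ->
    (L ^ n).-1 <= size p.
Proof.
apply: (lower_lin (L := L) (phi := cphi) (del := cdel) cH1 cH2); last exact: L0.
- by move=> t; rewrite /cdel; case: (t == j0).
- by rewrite /cphi sy_o /o /= ffunE.
- by rewrite /cphi sy_ptn ptn_val eqxx ltn_predL L0.
Qed.

Lemma line_edge j k : k.+1 < L -> edge G (sy (ptn j k)) (sy (ptn j k.+1)).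
Proof.
move=> Hk; apply: (cC2 (j := j)); rewrite !sy_ptn.
- exact: star_ptn.
- exact: star_ptn.
- exact: agree_ptn.
- by rewrite !ptn_val eqxx Hk (ltnW Hk).
Qed.

Lemma line_type j k : k.+1 < L -> etype G (sy (ptn j k)) (sy (ptn j k.+1)) = j.
Proof.
move=> Hk; have := cub_type (line_edge j Hk); rewrite !sy_ptn => C.
apply: (cube_edge_uniq C); apply/andP; split; first exact: agree_ptn.
by rewrite !ptn_val eqxx Hk (ltnW Hk).
Qed.

Lemma line n j : reach (L ^ n).-1 (nseq_tuple n (sy o)) (nseq_tuple n (sy (ptn j L.-1))).
Proof.
elim: n => [|n IH].
  by rewrite (tuple0 (nseq_tuple 0 _)) (tuple0 (nseq_tuple 0 (sy (ptn j L.-1)))); apply: reach_refl.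
have Hk : forall k, k < L -> reach (k * L ^ n + (L ^ n).-1)
    (ctup (sy o) (nseq_tuple n (sy o))) (ctup (sy (ptn j k)) (nseq_tuple n (sy (ptn j L.-1)))).
  elim=> [|k IHk] Hk.
    by rewrite mul0n add0n (ptn0 j); exact: (reach_cons irrG _ IH).
  have R1 := IHk (ltnW Hk).
  have He := line_edge j Hk.
  have Hg : glue G (etype G (sy (ptn j k)) (sy (ptn j k.+1))) (sy (ptn j L.-1)) (sy o).
    by rewrite (line_type j Hk); apply: C3e.
  have R2 := reach_adj (cross_adj irrG n He Hg).
  have R3 := reach_cons irrG (sy (ptn j k.+1)) IH.
  apply: reach_mono (reach_trans R1 (reach_trans R2 R3)).
  have : 0 < L ^ n by rewrite expn_gt0 L0.
  move: (L ^ n) => Z; nia.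
rewrite !nseq_ctup; apply: reach_mono (Hk L.-1 _); last by rewrite ltn_predL L0.
have : 0 < L ^ n by rewrite expn_gt0 L0.
rewrite expnS; have := L0; move: (L ^ n) => Z; nia.
Qed.

Definition cH (y : sym G) : bool := (y == sy o) || [exists j, y == sy (ptn j L.-1)].

Lemma toO n h : cH h -> reach (L ^ n).-1 (nseq_tuple n h) (nseq_tuple n (sy o)).
Proof.
case/orP => [/eqP ->|/existsP [j /eqP ->]]; first exact: reach_refl.
exact: reach_sym (line n j).
Qed.

Lemma cub_est : diam_estimate G.
Proof.
have HL2 : 2 <= L by apply: leq_trans HL.
apply: (@estimate_of _ _ L 2 (2 * Bb G 2)) => // n Hn.
have Hglue : forall x y, edge G x y -> exists p q, [/\ cH p, cH q & glue G (etype G x y) p q].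
  move=> x y _; exists (sy (ptn (etype G x y) L.-1)), (sy o); split.
  - by rewrite /cH; apply/orP; right; apply/existsP; exists (etype G x y).
  - by rewrite /cH eqxx.
  - exact: C3e.
have Hconn : forall a, connect (undirected G) a (sy o).
  by case: cIgs => _ [_ [Hc' _]].
have HE : forall n h g, cH h -> cH g -> reach (2 * L ^ n) (nseq_tuple n h) (nseq_tuple n g).
  move=> m h g Hh Hg; apply: reach_mono (reach_trans (toO m Hh) (reach_sym (toO m Hg))).
  move: (L ^ m) => Z; lia.
have Hc0 : cH (sy o) by rewrite /cH eqxx.
have HU := upper_all irrG (c0 := sy o) (Ls := L) (E := 2) (H := cH) Hc0 HL2 Hglue Hconn HE (n := n).
have HLw := @cub_lower n.
have [D [HD [H1 H2]]] := diam_exists HU (ex_intro _ _ (ex_intro _ _ HLw)).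
exists D; split => //; split => //.
have : 2 <= L ^ n.
  by apply: leq_trans HL2 _; rewrite -{1}(expn1 L) leq_exp2l // ltnW.
move: (L ^ n) H1 => Z; lia.
Qed.

End Cub.

Theorem theorem5p14 :
  (forall (d L s : nat) (hd : 0 < d), 3 <= L -> 0 < s ->
     forall (G : igs 'I_d) (iota : sym G -> cube_sym d L s),
       cubical d L s hd G iota -> diam_estimate G) /\
  diam_estimate gasket /\
  diam_estimate carpet.
Proof.
split; last by split; [exact: gasket_est | exact: carpet_est].
move=> d L s hd HL Hs G iota Hc.
have [[[y0 _] _] _] := Hc.
exact: (cub_est HL Hs Hc y0).
Qed.
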